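(* Let $\mathcal G$ be an MMPG arena. (i) Let $(\sigma,\gamma)$ be a well-behaved perfectly-incentivised strategy profile that is an incentive strategy profile; let $Q$ be the set of vertices occurring on $\pi_\sigma$, $S$ the set of vertices occurring infinitely often on $\pi_\sigma$, $p_e$ the limit frequency of each edge $e$ on $\pi_\sigma$, $p_v=\sum_{(v,w)\in E}p_{(v,w)}$ for $v\in V$, and $\gamma_p$ the constant incentive of follower $p$ along $\pi_\sigma$. Then $((p_v)_{v},(p_e)_{e},(\gamma_p)_{p})$ satisfies $\mathrm{LP}(Q,S)$. (ii) Conversely, let $(\sigma,\gamma)$ be any pair of a well-behaved strategy profile and an incentive profile, let $Q,S,p_e,p_v$ be defined from $\pi_\sigma$ as in (i), and suppose $((p_v),(p_e),(\gamma_p(\sigma))_p)$ satisfies $\mathrm{LP}(Q,S)$. Then the perfectly-incentivised strategy profile $(\sigma^*,\gamma^* )$ with $\pi_{\sigma^*}=\pi_\sigma$ and constant incentive $\gamma_p(\sigma)$ for each follower $p$ along the play is an incentive strategy profile.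
   Context: A multi-player mean-payoff game (MMPG) arena is a tuple $\mathcal G=(P,V,(V_p)_{p\in P},v_0,E,(r_p)_{p\in P})$ where $P$ is a finite set of players containing a distinguished leader $l\in P$ (the other players are called followers), $V$ is a finite set of vertices with initial vertex $v_0\in V$, $(V_p)_{p\in P}$ is a partition of $V$ (player $p$ owns $V_p$), $E\subseteq V\times V$ is an edge set such that every vertex has at least one successor, and $r_p:E\to\mathbb Q$ is the reward function of player $p$. A history is a finite sequence $h=v_0v_1\dots v_n$ starting at $v_0$ with $(v_i,v_{i+1})\in E$ for all $i<n$; $\mathsf{last}(h)=v_n$. A play is an infinite such sequence. A strategy of player $p$ is a function $\sigma_p$ assigning to every history $h$ with $\mathsf{last}(h)\in V_p$ a vertex $v$ with $(\mathsf{last}(h),v)\in E$. A strategy profile $\sigma=(\sigma_p)_{p\in P}$ determines a unique play $\pi_\sigma$. The raw payoff of player $p$ on a play $\pi=v_0v_1\dots$ is $r_p(\pi)=\liminf_{n\to\infty}\frac1n\sum_{i=0}^{n-1}r_p((v_i,v_{i+1}))$, and $r_p(\sigma):=r_p(\pi_\sigma)$. For a profile $\sigma$, a player $p$ and a strategy $\sigma'$ of $p$, $\sigma_{p,\sigma'}$ denotes the profile obtained from $\sigma$ by replacing $p$'s strategy with $\sigma'$. An incentive for a follower $p$ is a function $\gamma_p$ from histories to $\mathbb R_{\ge 0}$; its value on a play $\pi=v_0v_1\dots$ is $\gamma_p(\pi)=\liminf_{n\to\infty}\frac1n\sum_{i=1}^{n}\gamma_p(v_0\dots v_i)$, and $\gamma_p(\sigma):=\gamma_p(\pi_\sigma)$.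 An incentive profile is $\gamma=(\gamma_p)_{p\in P\setminus\{l\}}$. A pair $(\sigma,\gamma)$ is an incentive strategy profile (ISP) if for every follower $p$ and every strategy $\sigma'$ of $p$: $r_p(\sigma)+\gamma_p(\sigma)\ge r_p(\sigma_{p,\sigma'})+\gamma_p(\sigma_{p,\sigma'})$. For a follower $p$, $\mathcal G_p$ is the two-player zero-sum mean-payoff game on the graph $(V,E)$ from any start vertex, in which player $p$ controls $V_p$ and maximises the liminf-average of $r_p$, while a coalition of all other players (including the leader) controls $V\setminus V_p$ and minimises it. Such games are determined with optimal memoryless strategies for both sides; $\mathrm{val}_p(v)$ denotes the value of $\mathcal G_p$ from vertex $v$. Fix, for each follower $p$, optimal memoryless strategies of both sides in $\mathcal G_p$. Let $r_{\max}=\max_{p\in P,e\in E}r_p(e)$. A history $h$ is deviating for a profile $\sigma$ if it is not a prefix of $\pi_\sigma$; then $\mathsf{dev}(h,\sigma)$ denotes the owner of $v_i$ for the largest $i$ such that $v_0\dots v_i$ is a prefix of $h$ and $v_{i+1}\ne\sigma(v_0\dots v_i)$ (the most recent player to have deviated from $\sigma$). A perfectly-incentivised strategy profile (PSP) is a pair $(\sigma,\gamma)$ such that: (i) for every follower $p$, $\gamma_p$ is constant on the prefixes of $\pi_\sigma$ (this constant is also denoted $\gamma_p$); (ii) on every deviating history $h$ with $p=\mathsf{dev}(h,\sigma)$, $v=\mathsf{last}(h)$ owned by $p'$, the move $\sigma_{p'}(h)=v'$ is the move prescribed at $v$ by the fixed optimal memoryless strategy in $\mathcal G_p$ (of $p$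 if $p'=p$, of the coalition otherwise); (iii) on deviating histories incentives are $0$, except that if in (ii) $p'$ is a follower and $p'\ne p$, then $\gamma_{p'}(h\cdot v')=r_{\max}+1-r_{p'}((v,v'))$. A PSP is determined by its play and its constant incentives along the play. The limit frequency of an edge $e$ on a play $\pi=v_0v_1\dots$ is $\lim_{n\to\infty}\frac1n|\{i<n:(v_i,v_{i+1})=e\}|$ when this limit exists. A strategy profile $\sigma$ is well-behaved if every edge has a limit frequency on $\pi_\sigma$. For sets $S\subseteq Q\subseteq V$, the constraint system $\mathrm{LP}(Q,S)$ over real variables $p_v$ ($v\in V$), $p_e$ ($e\in E$), $\gamma_p$ ($p\in P\setminus\{l\}$) consists of: (1) $p_v=0$ for $v\notin S$ and $p_v\ge0$ for $v\in S$; (2) $p_e=0$ for $e\in E\setminus(S\times S)$ and $p_e\ge 0$ for $e\in E\cap(S\times S)$; (3) $\sum_{v\in V}p_v=1$; (4) $p_s=\sum_{(s,t)\in E}p_{(s,t)}$ for all $s\in S$ and $p_t=\sum_{(s,t)\in E}p_{(s,t)}$ for all $t\in S$; (5) $\gamma_p\ge 0$ and $\gamma_p+\sum_{e\in E}p_e r_p(e)\ge\max_{v\in Q}\mathrm{val}_p(v)$ for every follower $p$. Its objective is to maximise $\sum_{e\in E}p_e r_l(e)-\sum_{p\in P\setminus\{l\}}\gamma_p$. *)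

(* Defs.v *)
From HB Require Import structures.
From mathcomp Require Import all_boot.
From Stdlib Require Import Reals ClassicalEpsilon.
From Stdlib Require QArith Qreals.

Set Implicit Arguments.
Unset Strict Implicit.
Unset Printing Implicit Defensive.

Inductive ER := Fin (x : R) | PInf | MInf.

Definition ER_le (a b : ER) : Prop :=
  match a, b with
  | MInf, _ => True
  | _, PInf => True
  | Fin x, Fin y => (x <= y)%R
  | _, _ => False
  end.

(* (+oo) + (-oo) never occurs below; convention -oo. *)
Definition ER_add (a b : ER) : ER :=
  match a, b with
  | Fin x, Fin y => Fin (x + y)%R
  | MInf, _ | _, MInf => MInf
  | _, _ => PInf
  end.

Definition is_liminf (u : nat -> R) (l : R) : Prop :=
  forall eps : R, (0 < eps)%R ->
    (exists N, forall n, (N <= n)%N -> (l - eps < u n)%R) /\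
    (forall N, exists n, (N <= n)%N /\ (u n < l + eps)%R).

Definition tends_to_pinf (u : nat -> R) : Prop :=
  forall M : R, exists N, forall n, (N <= n)%N -> (M < u n)%R.

Definition liminf (u : nat -> R) : ER :=
  match excluded_middle_informative (exists l, is_liminf u l) with
  | left H => Fin (proj1_sig (constructive_indefinite_description _ H))
  | right _ =>
      match excluded_middle_informative (tends_to_pinf u) with
      | left _ => PInf
      | right _ => MInf
      end
  end.

Definition avg (u : nat -> R) (n : nat) : R := (sum_f_R0 u n / INR (S n))%R.

Record arena := Arena {
  Pl : finType;
  Vt : finType;
  leader : Pl;
  owner : Vt -> Pl;                    (* V_p = owner^-1 p : a partition of V *)
  init : Vt;
  Ed : rel Vt;
  Ed_total : forall v, exists w, Ed v w;
  rew : Pl -> Vt -> Vt -> QArith_base.Q          (* r_p((u,w)); only used on edges *)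
}.

Section Arena.
Variable A : arena.
Local Notation P := (Pl A).
Local Notation V := (Vt A).
Local Notation E := (@Ed A).
Local Notation own := (@owner A).
Local Notation v0 := (init A).
Local Notation r := (@rew A).

Definition follower (p : P) : Prop := p <> leader A.

(* A history s v1 ... vn starting at s is represented by the list [:: v1; ...; vn];
   it is a history iff path E s h.  Its last vertex is last s h. *)

Definition strategy_for (s : V) (C : P -> bool) (sigma : seq V -> V) : Prop :=
  forall h, path E s h -> C (own (last s h)) -> E (last s h) (sigma h).

Definition profile (sigma : seq V -> V) : Prop :=
  strategy_for v0 (fun _ => true) sigma.

Definition strategy_of (p : P) (sigma : seq V -> V) : Prop :=
  strategy_for v0 (fun q => q == p) sigma.

Fixpoint hist (s : V) (sigma : seq V -> V) (n : nat) : seq V :=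
  match n with
  | 0 => [::]
  | n'.+1 => let h := hist s sigma n' in rcons h (sigma h)
  end.

Definition play (s : V) (sigma : seq V -> V) (n : nat) : V := last s (hist s sigma n).

Definition deviate (sigma : seq V -> V) (p : P) (sigma' : seq V -> V) : seq V -> V :=
  fun h => if own (last v0 h) == p then sigma' h else sigma h.

Definition mean_payoff (p : P) (pi : nat -> V) : ER :=
  liminf (avg (fun i => Q2R (r p (pi i) (pi i.+1)))).

Definition raw_payoff (p : P) (sigma : seq V -> V) : ER := mean_payoff p (play v0 sigma).

Definition is_incentive (gamma : P -> seq V -> R) : Prop :=
  forall p h, follower p -> path E v0 h -> (0 <= gamma p h)%R.

Definition inc_value (gamma : P -> seq V -> R) (p : P) (sigma : seq V -> V) : ER :=
  liminf (avg (fun i => gamma p (hist v0 sigma i.+1))).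

Definition is_ISP (sigma : seq V -> V) (gamma : P -> seq V -> R) : Prop :=
  forall p, follower p -> forall sigma', strategy_of p sigma' ->
    ER_le (ER_add (raw_payoff p (deviate sigma p sigma'))
                  (inc_value gamma p (deviate sigma p sigma')))
          (ER_add (raw_payoff p sigma) (inc_value gamma p sigma)).

Definition combine (s : V) (p : P) (sp sc : seq V -> V) : seq V -> V :=
  fun h => if own (last s h) == p then sp h else sc h.

Definition optimal_G (p : P) (val : V -> R) (tmax tmin : V -> V) : Prop :=
  (forall v, own v = p -> E v (tmax v)) /\
  (forall v, own v <> p -> E v (tmin v)) /\
  forall s : V,
    (forall sc, strategy_for s (fun q => q != p) sc ->
       ER_le (Fin (val s))
             (mean_payoff p (play s (combine s p (fun h => tmax (last s h)) sc)))) /\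
    (forall sp, strategy_for s (fun q => q == p) sp ->
       ER_le (mean_payoff p (play s (combine s p sp (fun h => tmin (last s h)))))
             (Fin (val s))).

Definition r_max : R :=
  let l := [seq Q2R (r x.1 x.2.1 x.2.2) |
             x <- [seq x <- enum {: P * (V * V)} | E x.2.1 x.2.2]] in
  foldr Rmax (head 0%R l) l.

Definition deviating (sigma : seq V -> V) (h : seq V) : Prop :=
  ~ (exists n, h = hist v0 sigma n).

(* i is the largest index with v_{i+1} <> sigma(v0 ... vi)  (h = [:: v1; ...]) *)
Definition is_last_dev (sigma : seq V -> V) (h : seq V) (i : nat) : Prop :=
  (i < size h)%N /\ nth v0 h i <> sigma (take i h) /\
  forall j, (i < j)%N -> (j < size h)%N -> nth v0 h j = sigma (take j h).

Definition dev_player (sigma : seq V -> V) (h : seq V) (p : P) : Prop :=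
  exists i, is_last_dev sigma h i /\ own (last v0 (take i h)) = p.

Definition punish_case (sigma : seq V -> V) (h' : seq V) (q : P) (h : seq V) (p : P) : Prop :=
  h' = rcons h (sigma h) /\ path E v0 h /\ deviating sigma h /\
  dev_player sigma h p /\ follower p /\ own (last v0 h) = q /\ q <> p.

Definition is_PSP (tmax tmin : P -> V -> V)
    (sigma : seq V -> V) (gamma : P -> seq V -> R) : Prop :=
  profile sigma /\ is_incentive gamma /\
  (forall p, follower p -> exists c, forall n, gamma p (hist v0 sigma n) = c) /\
  (forall h, path E v0 h -> deviating sigma h ->
     forall p, follower p -> dev_player sigma h p ->
       sigma h = (if own (last v0 h) == p then tmax p (last v0 h)
                  else tmin p (last v0 h))) /\
  (forall h', path E v0 h' -> deviating sigma h' -> forall q, follower q ->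
     (forall h p, punish_case sigma h' q h p ->
        gamma q h' = (r_max + 1 - Q2R (r q (last v0 h) (sigma h)))%R) /\
     (~ (exists h p, punish_case sigma h' q h p) -> gamma q h' = 0%R)).

Definition freq (pi : nat -> V) (u w : V) (n : nat) : R :=
  (INR (count (fun i => (pi i == u) && (pi i.+1 == w)) (iota 0 n.+1)) / INR n.+1)%R.

Definition well_behaved (sigma : seq V -> V) : Prop :=
  forall u w, E u w -> exists f, Un_cv (freq (play v0 sigma) u w) f.

Definition occurs (pi : nat -> V) (v : V) : Prop := exists n, pi n = v.
Definition occurs_inf (pi : nat -> V) (v : V) : Prop :=
  forall N, exists n, (N <= n)%N /\ pi n = v.

Definition vertex_weight (pe : V -> V -> R) (v : V) : R :=
  \big[Rplus/0%R]_(w : V | E v w) pe v w.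

(* ((pv),(pe),(g)) satisfies the constraints of LP(Q,S); pe u w is the
   variable p_(u,w) for edges (u,w) in E; g p the variable gamma_p *)
Definition sat_LP (val : P -> V -> R) (Qs Ss : V -> Prop)
    (pv : V -> R) (pe : V -> V -> R) (g : P -> R) : Prop :=
  (forall v, (~ Ss v -> pv v = 0%R) /\ (Ss v -> (0 <= pv v)%R)) /\
  (forall u w, E u w ->
     (~ (Ss u /\ Ss w) -> pe u w = 0%R) /\ (Ss u /\ Ss w -> (0 <= pe u w)%R)) /\
  \big[Rplus/0%R]_(v : V) pv v = 1%R /\
  (forall s, Ss s -> pv s = \big[Rplus/0%R]_(t : V | E s t) pe s t) /\
  (forall t, Ss t -> pv t = \big[Rplus/0%R]_(s : V | E s t) pe s t) /\
  (forall p, follower p ->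
     (0 <= g p)%R /\
     forall v, Qs v ->
       (val p v <= g p + \big[Rplus/0%R]_(x : V * V | E x.1 x.2)
                            (pe x.1 x.2 * Q2R (r p x.1 x.2)))%R).

End Arena.

(* Main.v *)
Require Import Defs.
From HB Require Import structures.
From mathcomp Require Import all_boot.
From Stdlib Require Import Reals.
From Stdlib Require QArith Qreals.
From Stdlib Require Import Lra FunctionalExtensionality ClassicalEpsilon Classical.

Lemma Rplus_assoc' : associative Rplus. Proof. move=>*; by rewrite Rplus_assoc. Qed.
HB.instance Definition _ := Monoid.isComLaw.Build R 0%R Rplus Rplus_assoc' Rplus_comm Rplus_0_l.

Lemma INR_le' m n : (m <= n)%N -> (INR m <= INR n)%R.
Proof. move/leP; apply: le_INR. Qed.

Lemma INRS_pos n : (0 < INR n.+1)%R.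
Proof. apply: lt_0_INR; apply/ltP. done. Qed.

Lemma small_tail C eps : (0 < eps)%R ->
  exists N, forall n, (N <= n)%N -> (C / INR n.+1 < eps)%R.
Proof.
move=> he; have [n0 Hn0] := INR_archimed eps C he.
exists n0 => n Hn.
have h1 := INRS_pos n.
have h2 : (INR n0 <= INR n.+1)%R by apply: INR_le'; apply: leq_trans Hn _.
apply/(Rmult_lt_reg_r (INR n.+1)) => //.
rewrite /Rdiv Rmult_assoc Rinv_l; last by lra.
nra.
Qed.

Lemma is_liminf_unique u l1 l2 : is_liminf u l1 -> is_liminf u l2 -> l1 = l2.
Proof.
move=> H1 H2.
have key : forall a b, is_liminf u a -> is_liminf u b -> ~ (a < b)%R.
  move=> a b Ha Hb hab.
  have he : (0 < (b - a) / 2)%R by lra.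
  have [[N HN] _] := Hb _ he.
  have [_ Hi] := Ha _ he.
  have [n [Hn Hu]] := Hi N.
  have := HN n Hn. lra.
have := key _ _ H1 H2; have := key _ _ H2 H1; lra.
Qed.

Lemma liminf_fin u l : is_liminf u l -> liminf u = Fin l.
Proof.
move=> H; rewrite /liminf.
case: excluded_middle_informative => [e|[]]; last by exists l.
case: constructive_indefinite_description => l' Hl' /=.
by rewrite (is_liminf_unique _ _ _ Hl' H).
Qed.

Lemma cv_is_liminf u l : Un_cv u l -> is_liminf u l.
Proof.
move=> H eps he; split.
  have [N HN] := H eps he; exists N => n Hn.
  have := HN n (ssrnat.leP Hn); rewrite /R_dist => /Rabs_def2; lra.
move=> N; have [N' HN] := H eps he; exists (maxn N N'); split; first exact: leq_maxl.
have := HN (maxn N N') (ssrnat.leP (leq_maxr _ _)); rewrite /R_dist => /Rabs_def2; lra.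
Qed.

Lemma sum_const u c n : (forall i, u i = c) -> sum_f_R0 u n = (c * INR n.+1)%R.
Proof.
move=> Hu; elim: n => [|n IH]; first by rewrite /= Hu; lra.
rewrite tech5 IH Hu (S_INR n.+1); lra.
Qed.

Lemma avg_const u c n : (forall i, u i = c) -> avg u n = c.
Proof.
move=> Hu; rewrite /avg (sum_const _ _ _ Hu); have := INRS_pos n.
move=> h; field; lra.
Qed.

Lemma liminf_const u c : (forall i, u i = c) -> liminf (avg u) = Fin c.
Proof.
move=> Hu; apply: liminf_fin; apply: cv_is_liminf => eps he; exists 0%nat => n _.
by rewrite (avg_const _ _ _ Hu) /R_dist Rminus_diag Rabs_R0.
Qed.

Lemma sum_eventually u N n : (N <= n)%N -> (forall i, (N <= i)%N -> u i = 0%R) ->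
  sum_f_R0 u n = sum_f_R0 u N.
Proof.
move=> + Hu; elim: n => [|n IH]; first by rewrite leqn0 => /eqP ->.
rewrite leq_eqVlt => /orP [/eqP->//|]; rewrite ltnS => hN /=.
by rewrite IH // Hu ?Rplus_0_r //; apply: leq_trans hN _.
Qed.

Lemma liminf_eventually0 u : (exists N, forall i, (N <= i)%N -> u i = 0%R) ->
  liminf (avg u) = Fin 0.
Proof.
move=> [N HN]; apply: liminf_fin; apply: cv_is_liminf => eps he.
have [N1 H1] := small_tail (Rabs (sum_f_R0 u N)) eps he.
exists (maxn N N1) => n /ssrnat.leP Hn.
rewrite /R_dist /avg Rminus_0_r (@sum_eventually u N n (leq_trans (leq_maxl _ _) Hn) HN).
have hp := INRS_pos n.
rewrite /Rdiv Rabs_mult Rabs_inv (Rabs_right (INR n.+1)); last lra.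
apply: H1; apply: leq_trans (leq_maxr _ _) Hn.
Qed.

Lemma sum_shift u n : sum_f_R0 u n.+1 = (u O + sum_f_R0 (fun i => u i.+1) n)%R.
Proof.
elim: n => [|n IH]; first by rewrite /=.
by rewrite tech5 IH tech5; lra.
Qed.

Lemma sum_bound u B n : (forall i, Rabs (u i) <= B)%R -> (Rabs (sum_f_R0 u n) <= B * INR n.+1)%R.
Proof.
move=> Hu; elim: n => [|n IH]; first by rewrite /=; have := Hu O; lra.
rewrite tech5 (S_INR n.+1).
apply: Rle_trans (Rabs_triang _ _) _; have := Hu n.+1; lra.
Qed.

Lemma avg_bound u B n : (forall i, Rabs (u i) <= B)%R -> (Rabs (avg u n) <= B)%R.
Proof.
move=> Hu; have h := @sum_bound u B n Hu; have hp := INRS_pos n.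
rewrite /avg /Rdiv Rabs_mult Rabs_inv (Rabs_right (INR n.+1)); last lra.
apply/(Rmult_le_reg_r (INR n.+1)) => //.
rewrite Rmult_assoc Rinv_l; lra.
Qed.

Lemma avg_shift_close u B : (forall i, Rabs (u i) <= B)%R ->
  forall eps, (0 < eps)%R -> exists N, forall n, (N <= n)%N ->
    (Rabs (avg u n.+1 - avg (fun i => u i.+1) n) < eps)%R.
Proof.
move=> Hu eps he.
have [N HN] := small_tail (2 * B) eps he.
exists N => n Hn; have := HN n Hn.
have hB : (0 <= B)%R by have := Hu O; have := Rabs_pos (u O); lra.
have ht := @avg_bound (fun i => u i.+1) B n (fun i => Hu i.+1).
set t := avg (fun i => u i.+1) n in ht *.
have hp := INRS_pos n.
have -> : avg u n.+1 = ((u O + t * INR n.+1) / (INR n.+1 + 1))%R.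
  rewrite /avg sum_shift /t /avg (S_INR n.+1); field; lra.
have -> : ((u O + t * INR n.+1) / (INR n.+1 + 1) - t = (u O - t) / (INR n.+1 + 1))%R.
  field; lra.
rewrite /Rdiv Rabs_mult Rabs_inv (Rabs_right (INR n.+1 + 1)); last lra.
move=> h2.
have h3 : (Rabs (u O - t) <= 2 * B)%R.
  apply: Rle_trans (Rabs_triang _ _) _; rewrite Rabs_Ropp; have := Hu O; lra.
apply: Rle_lt_trans h2.
apply: Rmult_le_compat; try lra.
- by apply: Rabs_pos.
- by apply: Rlt_le; apply: Rinv_0_lt_compat; lra.
- apply: Rinv_le_contravar; lra.
Qed.

Lemma liminf_close x y : (forall eps, (0 < eps)%R -> exists N, forall n, (N <= n)%N ->
    (Rabs (x n.+1 - y n) < eps)%R) ->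
  forall l, is_liminf x l <-> is_liminf y l.
Proof.
move=> Hc l; split => H eps he.
  have he2 : (0 < eps / 2)%R by lra.
  have [N2 HN2] := Hc _ he2; have [[N1 HN1] Hi] := H _ he2; split.
- exists (maxn N1 N2) => n Hn.
  have := HN1 n.+1 (leq_trans (leq_maxl _ _) (leqW Hn)).
  have := HN2 n (leq_trans (leq_maxr _ _) Hn); move/Rabs_def2; lra.
- move=> N; have [n [Hn Hy]] := Hi (maxn N N2).+1.
  case: n Hn Hy => [//|k] Hk Hy; exists k; split.
    by apply: leq_trans (leq_maxl _ _) Hk.
  have := HN2 k (leq_trans (leq_maxr _ _) Hk); move/Rabs_def2; lra.
have he2 : (0 < eps / 2)%R by lra.
have [N2 HN2] := Hc _ he2; have [[N1 HN1] Hi] := H _ he2; split.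
- exists (maxn N1 N2).+1 => n Hn; case: n Hn => [//|k] Hk.
  have := HN1 k (leq_trans (leq_maxl _ _) Hk).
  have := HN2 k (leq_trans (leq_maxr _ _) Hk); move/Rabs_def2; lra.
- move=> N; have [n [Hn Hy]] := Hi (maxn N N2).
  exists n.+1; split; first by apply: leq_trans (leq_maxl _ _) (leqW Hn).
  have := HN2 n (leq_trans (leq_maxr _ _) Hn); move/Rabs_def2; lra.
Qed.

Lemma bounded_not_pinf u B : (forall n, Rabs (u n) <= B)%R -> ~ tends_to_pinf u.
Proof.
move=> Hu H; have [N HN] := H B; have := HN N (leqnn _); have := Hu N.
move=> h1 h2; have := Rle_abs (u N); lra.
Qed.

Lemma liminf_noliminf x : ~ (exists l, is_liminf x l) ->
  liminf x = if excluded_middle_informative (tends_to_pinf x) then PInf else MInf.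
Proof.
move=> N; rewrite /liminf; case: excluded_middle_informative => [e|e] //.
by case: excluded_middle_informative.
Qed.

Lemma liminf_eq x y : (forall l, is_liminf x l <-> is_liminf y l) ->
  (tends_to_pinf x <-> tends_to_pinf y) -> liminf x = liminf y.
Proof.
move=> H1 H2.
case: (classic (exists l, is_liminf x l)) => [[l Hl]|N].
  by rewrite (liminf_fin _ _ Hl) (liminf_fin _ _ ((H1 l).1 Hl)).
have N' : ~ (exists l, is_liminf y l) by move=> [l Hl]; apply: N; exists l; apply/H1.
rewrite (liminf_noliminf _ N) (liminf_noliminf _ N').
case: (excluded_middle_informative (tends_to_pinf x)) => a;
  case: (excluded_middle_informative (tends_to_pinf y)) => b //.
all: exfalso; tauto.
Qed.

Lemma liminf_shift1 u B : (forall i, Rabs (u i) <= B)%R ->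
  liminf (avg u) = liminf (avg (fun i => u i.+1)).
Proof.
move=> Hu.
have Hc := avg_shift_close u B Hu.
have nx := bounded_not_pinf _ B (fun n => avg_bound u B n Hu).
have ny := bounded_not_pinf _ B (fun n => @avg_bound (fun i => u i.+1) B n (fun i => Hu i.+1)).
apply: liminf_eq; first exact: liminf_close.
tauto.
Qed.

Lemma liminf_shift u B m : (forall i, Rabs (u i) <= B)%R ->
  liminf (avg u) = liminf (avg (fun i => u (i + m)%N)).
Proof.
move=> Hu; elim: m => [|m IH].
  by congr (liminf (avg _)); apply: functional_extensionality => i; rewrite addn0.
rewrite IH (@liminf_shift1 (fun i => u (i + m)%N) B) //.
by congr (liminf (avg _)); apply: functional_extensionality => i; rewrite addSnnS.
Qed.

Lemma Un_cv_ext u v l : (forall n, u n = v n) -> Un_cv u l -> Un_cv v l.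
Proof. by move=> H Hu eps he; have [N HN] := Hu eps he; exists N => n Hn; rewrite -H; apply: HN. Qed.

Lemma Un_cv_const c : Un_cv (fun _ => c) c.
Proof. by move=> eps he; exists 0%nat => n _; rewrite /R_dist Rminus_diag Rabs_R0. Qed.

Lemma cv_big (I : Type) (s : seq I) (P : pred I) (F : I -> nat -> R) (L : I -> R) :
  (forall i, P i -> Un_cv (F i) (L i)) ->
  Un_cv (fun n => \big[Rplus/0%R]_(i <- s | P i) F i n) (\big[Rplus/0%R]_(i <- s | P i) L i).
Proof.
move=> H; elim: s => [|i s IH].
  by rewrite big_nil; apply: (Un_cv_ext (fun _ => 0%R)) => [n|]; [rewrite big_nil | apply: Un_cv_const].
rewrite big_cons; case: ifP => Pi.
  apply: (Un_cv_ext (fun n => F i n + \big[Rplus/0%R]_(j <- s | P j) F j n)%R).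
    by move=> n; rewrite big_cons Pi.
  by apply: CV_plus => //; apply: H.
by apply: (Un_cv_ext _ _ _ _ IH) => n; rewrite big_cons Pi.
Qed.

Lemma INR_addn m n : INR (m + n)%N = (INR m + INR n)%R.
Proof. exact: plus_INR. Qed.

Lemma big_Rmult_r (I : Type) (s : seq I) (P : pred I) (F : I -> R) c :
  (\big[Rplus/0%R]_(i <- s | P i) F i * c = \big[Rplus/0%R]_(i <- s | P i) (F i * c))%R.
Proof.
elim: s => [|i s IH]; first by rewrite !big_nil Rmult_0_l.
by rewrite !big_cons; case: ifP => _ //; rewrite Rmult_plus_distr_r IH.
Qed.

Lemma count_big (s : seq nat) (c : nat -> bool) :
  \big[Rplus/0%R]_(i <- s | c i) 1%R = INR (count c s).
Proof.
elim: s => [|i s IH]; first by rewrite big_nil.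
rewrite big_cons /= INR_addn IH; case: (c i) => /=; lra.
Qed.

Lemma big_indic (T : finType) (P : pred T) (y : T) (b : bool) (f : T -> R) :
  (b -> P y) ->
  \big[Rplus/0%R]_(x | P x) (INR (b && (y == x)) * f x)%R = if b then f y else 0%R.
Proof.
move=> H; case: b H => [H|_].
  rewrite (bigD1 y) ?H //= eqxx /= Rmult_1_l big1 ?Rplus_0_r // => x /andP [_ hx].
  by rewrite eq_sym (negbTE hx) /= Rmult_0_l.
by rewrite big1 // => x _; rewrite /= Rmult_0_l.
Qed.

Lemma count_weight (T : finType) (P : pred T) (a : nat -> T) (c : nat -> bool)
  (s : seq nat) (f : T -> R) :
  (forall i, i \in s -> c i -> P (a i)) ->
  \big[Rplus/0%R]_(x | P x) (INR (count (fun i => c i && (a i == x)) s) * f x)%R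
  = \big[Rplus/0%R]_(i <- s | c i) f (a i).
Proof.
elim: s => [|i s IH] H.
  by rewrite big_nil big1 // => x _; rewrite /= Rmult_0_l.
rewrite big_cons.
rewrite (eq_bigr (fun x => INR (c i && (a i == x)) * f x + INR (count (fun i => c i && (a i == x)) s) * f x)%R); last first.
  by move=> x _; rewrite /= INR_addn Rmult_plus_distr_r.
rewrite big_split /= big_indic; last by move=> ci; apply: H => //; rewrite inE eqxx.
rewrite IH; last by move=> j js cj; apply: H => //; rewrite inE js orbT.
by case: (c i) => //; rewrite Rplus_0_l.
Qed.

Lemma sum_iota u n : sum_f_R0 u n = \big[Rplus/0%R]_(i <- iota 0 n.+1) u i.
Proof.
elim: n => [|n IH]; first by rewrite /= big_cons big_nil Rplus_0_r.
have -> : iota 0 n.+2 = iota 0 n.+1 ++ [:: n.+1] by rewrite -(addn1 n.+1) iotaD.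
by rewrite tech5 IH big_cat /= big_seq1.
Qed.

Section H.
Variable A : arena.
Local Notation V := (Vt A).
Local Notation E := (@Ed A).
Local Notation own := (@owner A).
Local Notation v0 := (init A).

Lemma size_hist s (t : seq V -> V) n : size (hist s t n) = n.
Proof. by elim: n => //= n IH; rewrite size_rcons IH. Qed.

Lemma play_S s (t : seq V -> V) n : play s t n.+1 = t (hist s t n).
Proof. by rewrite /play /= last_rcons. Qed.

Lemma hist_take s (t : seq V -> V) n k : (k <= n)%N -> take k (hist s t n) = hist s t k.
Proof.
elim: n => [|n IH]; first by rewrite leqn0 => /eqP -> /=.
rewrite leq_eqVlt => /orP [/eqP ->|]; first by rewrite take_oversize // size_hist.
rewrite ltnS => hk /=; rewrite -cats1 take_cat size_hist.
rewrite leq_eqVlt in hk; case/orP: hk => [/eqP ->|hk]; first by rewrite ltnn subnn take0 cats0.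
by rewrite hk IH // ltnW.
Qed.

Lemma nth_hist s (t : seq V -> V) n k x : (k < n)%N -> nth x (hist s t n) k = t (hist s t k).
Proof.
move=> hk.
have <- : nth x (take k.+1 (hist s t n)) k = nth x (hist s t n) k by rewrite nth_take.
by rewrite hist_take //= nth_rcons size_hist ltnn eqxx.
Qed.

Lemma path_hist s (t : seq V -> V) n :
  strategy_for s (fun _ => true) t -> path E s (hist s t n).
Proof.
move=> Ht; elim: n => [|n IH] //.
rewrite /= rcons_path IH /=; apply: Ht => //.
Qed.

Lemma edge_play s (t : seq V -> V) n :
  strategy_for s (fun _ => true) t -> E (play s t n) (play s t n.+1).
Proof. move=> Ht; rewrite play_S /play; apply: (Ht); last done. exact: (path_hist _ _ _ Ht). Qed.

Definition shift (t : seq V -> V) (H : seq V) : seq V -> V := fun h => t (H ++ h).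

Lemma hist_cat s (t : seq V -> V) m k :
  hist s t (m + k) = hist s t m ++ hist (play s t m) (shift t (hist s t m)) k.
Proof.
elim: k => [|k IH]; first by rewrite addn0 cats0.
by rewrite addnS /= IH rcons_cat.
Qed.

Lemma play_cat s (t : seq V -> V) m k :
  play s t (m + k) = play (play s t m) (shift t (hist s t m)) k.
Proof. by rewrite /play hist_cat last_cat. Qed.

Lemma hist_agree s (t1 t2 : seq V -> V) n :
  (forall k, (k < n)%N -> t1 (hist s t1 k) = t2 (hist s t1 k)) ->
  hist s t1 n = hist s t2 n.
Proof.
elim: n => [//|n IH] H /=.
rewrite IH; last by move=> k hk; apply: H; apply: ltnW.
by rewrite -IH ?H // => k hk; apply: H; apply: ltnW.
Qed.

Lemma play_agree s (t1 t2 : seq V -> V) :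
  (forall k, t1 (hist s t1 k) = t2 (hist s t1 k)) -> play s t1 = play s t2.
Proof.
move=> H; apply: functional_extensionality => n.
by rewrite /play (hist_agree s t1 t2 n) // => k _; apply: H.
Qed.

Lemma shift_strategy s (t : seq V -> V) m (C : _ -> bool) :
  strategy_for s (fun _ => true) t ->
  strategy_for (play s t m) C (shift t (hist s t m)).
Proof.
move=> Ht h hp _; rewrite /shift.
have -> : last (play s t m) h = last s (hist s t m ++ h) by rewrite last_cat.
apply: (Ht) => //; rewrite cat_path (path_hist _ _ _ Ht) /= -/(play s t m) //.
Qed.

End H.

Lemma ex_min (P : nat -> Prop) : (exists k, P k) ->
  exists k, P k /\ forall j, (j < k)%N -> ~ P j.
Proof.
move=> [k Hk]; elim/ltn_ind: k Hk => k IH Hk.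
case: (classic (exists j, (j < k)%N /\ P j)) => [[j [hj Pj]]|N].
  exact: IH hj Pj.
exists k; split => // j hj Pj; apply: N; by exists j.
Qed.

Lemma ex_max (P : nat -> Prop) K : (exists i, P i) -> (forall i, P i -> (i < K)%N) ->
  exists i, P i /\ forall j, P j -> (j <= i)%N.
Proof.
elim: K => [|K IH] Hex HK; first by case: Hex => i /HK.
case: (classic (P K)) => PK.
  by exists K; split => // j /HK.
apply: IH => // i Pi; have := HK i Pi; rewrite ltnS leq_eqVlt => /orP [/eqP e|//].
by rewrite e in Pi.
Qed.

Section D.
Variable A : arena.
Local Notation V := (Vt A).
Local Notation E := (@Ed A).
Local Notation own := (@owner A).
Local Notation v0 := (init A).

Lemma is_last_dev_unique (s : seq V -> V) h i j :
  is_last_dev s h i -> is_last_dev s h j -> i = j.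
Proof.
move=> [hi [ni Hi]] [hj [nj Hj]].
case: (ltngtP i j) => // c.
- by case: nj; apply: Hi.
- by case: ni; apply: Hj.
Qed.

Lemma dev_player_unique (s : seq V -> V) h p1 p2 :
  dev_player s h p1 -> dev_player s h p2 -> p1 = p2.
Proof.
move=> [i [Hi <-]] [j [Hj <-]].
by rewrite (is_last_dev_unique _ _ _ _ Hi Hj).
Qed.

Lemma dev_cases (s t : seq V -> V) p :
  (forall h, own (last v0 h) != p -> t h = s h) ->
  (forall n, hist v0 t n = hist v0 s n) \/
  exists m, own (play v0 t m) = p /\ hist v0 t m = hist v0 s m /\
    t (hist v0 t m) <> s (hist v0 t m) /\
    forall k, (m < k)%N -> deviating s (hist v0 t k) /\ dev_player s (hist v0 t k) p.
Proof.
move=> Hts.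
case: (classic (forall k, t (hist v0 t k) = s (hist v0 t k))) => [H|N].
  by left => n; apply: hist_agree => k _; apply: H.
right; have [k0 Hk] := not_all_ex_not _ _ N.
have [m [Hm Hmin]] := ex_min (fun k => t (hist v0 t k) <> s (hist v0 t k)) (ex_intro _ k0 Hk).
clear k0 Hk N.
have Hh : hist v0 t m = hist v0 s m.
  by apply: hist_agree => j hj; apply: NNPP; apply: Hmin.
have Ho : own (play v0 t m) = p.
  case: (eqVneq (own (play v0 t m)) p) => // ne.
  by case: Hm; apply: Hts.
exists m; split => //; split => //; split => // k hk; split.
  move=> [j Hj].
  have ej : j = k by rewrite -(size_hist _ v0 s j) -Hj size_hist.
  subst j.
  have := congr1 (fun h => nth v0 h m) Hj => /=.
  rewrite !nth_hist // -Hh; exact: Hm.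
have [i [[ik Pi] Hmax]] := ex_max (fun i => (i < k)%N /\ t (hist v0 t i) <> s (hist v0 t i)) k
  (ex_intro _ m (conj hk Hm)) (fun i P => P.1).
exists i; split.
  split; first by rewrite size_hist.
  split; first by rewrite nth_hist // hist_take // ltnW.
  move=> j ij; rewrite size_hist => jk.
  rewrite nth_hist // hist_take; last exact: ltnW.
  apply: NNPP => ne; have := Hmax j (conj jk ne); rewrite leqNgt ij //.
rewrite hist_take; last exact: ltnW.
case: (eqVneq (own (last v0 (hist v0 t i))) p) => // ne.
by case: Pi; apply: Hts.
Qed.

Lemma gamma_zero tmax tmin (s t : seq V -> V) gamma p m :
  is_PSP tmax tmin s gamma -> follower p -> profile t ->
  hist v0 t m = hist v0 s m ->
  (forall k, (m < k)%N -> deviating s (hist v0 t k) /\ dev_player s (hist v0 t k) p) ->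
  forall k, (m < k)%N -> gamma p (hist v0 t k) = 0%R.
Proof.
move=> [_ [_ [_ [_ H3]]]] fp pt Hh Hd k mk.
have [dk pk] := Hd k mk.
have [_ H] := H3 _ (path_hist _ v0 t k pt) dk p fp.
apply: H => [[h [p' [e [_ [hdev [hdp [_ [ho hne]]]]]]]]].
case: k mk dk pk e => [//|k] mk dk pk e.
move: e => /= /rcons_inj [eh _]; subst h.
move: mk; rewrite ltnS leq_eqVlt => /orP [/eqP ek|mk].
  by subst k; apply: hdev; exists m.
have [_ pk'] := Hd k mk.
by apply: hne; rewrite (dev_player_unique _ _ _ _ pk' hdp) in ho *; rewrite -ho.
Qed.

End D.

Lemma big_nonneg (I : Type) (s : seq I) (P : pred I) (F : I -> R) :
  (forall i, P i -> 0 <= F i)%R -> (0 <= \big[Rplus/0%R]_(i <- s | P i) F i)%R.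
Proof. move=> H; apply: big_ind => //; [lra | move=> *; lra]. Qed.

Lemma le_big (T : finType) (F : T -> R) y :
  (forall x, 0 <= F x)%R -> (F y <= \big[Rplus/0%R]_x F x)%R.
Proof.
move=> H; rewrite (bigD1 y) //=.
have := @big_nonneg _ (index_enum T) (fun x => x != y) F (fun x _ => H x); lra.
Qed.

Section M.
Variable A : arena.
Local Notation V := (Vt A).
Local Notation E := (@Ed A).
Local Notation own := (@owner A).
Local Notation v0 := (init A).
Local Notation r := (@rew A).

Lemma mean_payoff_shift p (pi : nat -> V) m :
  mean_payoff p pi = mean_payoff p (fun k => pi (k + m)%N).
Proof.
rewrite /mean_payoff.
set B := \big[Rplus/0%R]_(x : Pl A * (V * V)) Rabs (Q2R (r x.1 x.2.1 x.2.2)).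
rewrite (liminf_shift _ B m); last first.
  move=> i; exact: (le_big _ (fun x : Pl A * (V * V) => Rabs (Q2R (r x.1 x.2.1 x.2.2)))
    (p, (pi i, pi i.+1)) (fun x => Rabs_pos _)).
by congr (liminf (avg _)); apply: functional_extensionality => i; rewrite addSn.
Qed.

Lemma mean_payoff_play_shift p s (t : seq V -> V) m :
  mean_payoff p (play s t) = mean_payoff p (play (play s t m) (shift A t (hist s t m))).
Proof.
rewrite (mean_payoff_shift p _ m); congr (mean_payoff p _).
by apply: functional_extensionality => k; rewrite addnC play_cat.
Qed.

Lemma raw_freq (s : seq V -> V) (pe : V -> V -> R) p :
  profile s ->
  (forall u w, E u w -> Un_cv (freq (play v0 s) u w) (pe u w)) ->
  raw_payoff p s = Fin (\big[Rplus/0%R]_(x : V * V | E x.1 x.2)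
                            (pe x.1 x.2 * Q2R (r p x.1 x.2)))%R.
Proof.
move=> ps Hpe; apply: liminf_fin; apply: cv_is_liminf.
set pi := play v0 s.
have Hedge : forall i, E (pi i) (pi i.+1) by move=> i; apply: edge_play.
apply: (Un_cv_ext (fun n => \big[Rplus/0%R]_(x : V * V | E x.1 x.2)
                             (freq pi x.1 x.2 n * Q2R (r p x.1 x.2)))%R).
  move=> n; rewrite /avg sum_iota.
  rewrite -(@count_weight (V * V)%type (fun x => E x.1 x.2) (fun i => (pi i, pi i.+1)) (fun _ => true)
    (iota 0 n.+1) (fun x => Q2R (r p x.1 x.2))); last by move=> i _ _; exact: Hedge.
  rewrite /Rdiv big_Rmult_r; apply: eq_bigr => [[a b]] _.
  rewrite /freq /Rdiv.
  have -> : count (fun i => true && ((pi i, pi i.+1) == (a, b))) (iota 0 n.+1) =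
            count (fun i => (pi i == a) && (pi i.+1 == b)) (iota 0 n.+1).
    by apply: eq_count => i; rewrite xpair_eqE.
  simpl fst; simpl snd; lra.
apply: cv_big => x Ex; apply: CV_mult; first exact: Hpe.
exact: Un_cv_const.
Qed.

End M.

Lemma count_small (a : pred nat) N k : (forall i, a i -> (i < N)%N) -> (count a (iota 0 k) <= N)%N.
Proof.
move=> H; case: (leqP k N) => hk.
  by apply: leq_trans (count_size _ _) _; rewrite size_iota.
rewrite -(subnKC (ltnW hk)) iotaD count_cat.
have -> : count a (iota (0 + N) (k - N)) = 0%N.
  apply/eqP; rewrite -leqn0 leqNgt -has_count; apply/hasP => [[i]].
  rewrite mem_iota add0n => /andP [hi _] /H; rewrite ltnNge hi //.
by rewrite addn0; apply: leq_trans (count_size _ _) _; rewrite size_iota.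
Qed.

Lemma freq_nonneg c n : (0 <= INR c / INR n.+1)%R.
Proof.
apply: Rmult_le_pos; first exact: pos_INR.
by apply: Rlt_le; apply: Rinv_0_lt_compat; apply: INRS_pos.
Qed.

Lemma cv_count0 (a : pred nat) N : (forall i, a i -> (i < N)%N) ->
  Un_cv (fun n => INR (count a (iota 0 n.+1)) / INR n.+1)%R 0%R.
Proof.
move=> H eps he; have [N1 HN1] := small_tail (INR N) eps he.
exists N1 => n /ssrnat.leP hn; rewrite /R_dist Rminus_0_r Rabs_right; last first.
  by apply: Rle_ge; apply: freq_nonneg.
apply: Rle_lt_trans (HN1 n hn).
apply: Rmult_le_compat_r.
  by apply: Rlt_le; apply: Rinv_0_lt_compat; apply: INRS_pos.
apply: INR_le'; exact: count_small.
Qed.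

Lemma lim_nonneg x l : Un_cv x l -> (forall n, 0 <= x n)%R -> (0 <= l)%R.
Proof.
move=> H Hx; apply: Rnot_lt_le => hl.
have [N HN] := H (- l)%R ltac:(lra).
have := HN N (le_n _); rewrite /R_dist => /Rabs_def2; have := Hx N; lra.
Qed.

Lemma count_shift (a : pred nat) m k :
  count (fun i => a i.+1) (iota m k) = count a (iota m.+1 k).
Proof. by elim: k m => [//|k IH] m /=; rewrite IH. Qed.

Lemma iota_last m k : iota m k.+1 = iota m k ++ [:: (m + k)%N].
Proof. by rewrite -addn1 iotaD. Qed.

Section L.
Variable A : arena.
Local Notation V := (Vt A).
Local Notation E := (@Ed A).
Local Notation v0 := (init A).

Variable pi : nat -> V.
Hypothesis Hedge : forall i, E (pi i) (pi i.+1).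
Variable pe : V -> V -> R.
Hypothesis Hpe : forall u w, E u w -> Un_cv (freq pi u w) (pe u w).

Lemma pe_nonneg u w : E u w -> (0 <= pe u w)%R.
Proof. move=> Euw; apply: (lim_nonneg _ _ (Hpe _ _ Euw)) => n; exact: freq_nonneg. Qed.

Lemma not_inf_ev v : ~ occurs_inf pi v -> exists N, forall n, (N <= n)%N -> pi n <> v.
Proof.
move=> H; have [N HN] := not_all_ex_not _ _ H; exists N => n hn e.
by apply: HN; exists n.
Qed.

Lemma pe_zero_src u w : E u w -> ~ occurs_inf pi u -> pe u w = 0%R.
Proof.
move=> Euw /not_inf_ev [N HN].
apply: (UL_sequence (freq pi u w)); first exact: Hpe.
apply: (cv_count0 _ N) => i /andP [/eqP e _].
by rewrite ltnNge; apply/negP => /HN.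
Qed.

Lemma pe_zero_tgt u w : E u w -> ~ occurs_inf pi w -> pe u w = 0%R.
Proof.
move=> Euw /not_inf_ev [N HN].
apply: (UL_sequence (freq pi u w)); first exact: Hpe.
apply: (cv_count0 _ N) => i /andP [_ /eqP e].
by rewrite ltnNge; apply/negP => /leqW /HN.
Qed.

Lemma out_sum t n :
  \big[Rplus/0%R]_(w | E t w) freq pi t w n =
  (INR (count (fun i => pi i == t) (iota 0 n.+1)) / INR n.+1)%R.
Proof.
rewrite /freq /Rdiv -big_Rmult_r -count_big.
rewrite -(@count_weight V (fun w => E t w) (fun i => pi i.+1) (fun i => pi i == t) (iota 0 n.+1) (fun _ => 1%R)).
  by congr (_ * _)%R; apply: eq_bigr => w _; rewrite Rmult_1_r.
by move=> i _ /eqP <-; apply: Hedge.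
Qed.

Lemma in_sum t n :
  \big[Rplus/0%R]_(u | E u t) freq pi u t n =
  (INR (count (fun i => pi i.+1 == t) (iota 0 n.+1)) / INR n.+1)%R.
Proof.
rewrite /freq /Rdiv -big_Rmult_r -count_big.
rewrite -(@count_weight V (fun u => E u t) (fun i => pi i) (fun i => pi i.+1 == t) (iota 0 n.+1) (fun _ => 1%R)).
  congr (_ * _)%R; apply: eq_bigr => u _; rewrite Rmult_1_r.
  by congr INR; apply: eq_count => i; rewrite andbC.
by move=> i _ /eqP <-; apply: Hedge.
Qed.

Lemma total_sum n :
  \big[Rplus/0%R]_(v : V) INR (count (fun i => pi i == v) (iota 0 n.+1)) = INR n.+1.
Proof.
have := @count_weight V (fun _ => true) pi (fun _ => true) (iota 0 n.+1) (fun _ => 1%R) (fun _ _ _ => erefl).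
rewrite count_big count_predT size_iota => <-.
by apply: eq_bigr => v _; rewrite Rmult_1_r.
Qed.

End L.

Section LP.
Variable A : arena.
Local Notation V := (Vt A).
Local Notation E := (@Ed A).

Variable pi : nat -> V.
Hypothesis Hedge : forall i, E (pi i) (pi i.+1).
Variable pe : V -> V -> R.
Hypothesis Hpe : forall u w, E u w -> Un_cv (freq pi u w) (pe u w).

Lemma cv_out v : Un_cv (fun n => \big[Rplus/0%R]_(w | E v w) freq pi v w n) (vertex_weight pe v).
Proof. by apply: cv_big => w Evw; apply: Hpe. Qed.

Lemma cv_in t : Un_cv (fun n => \big[Rplus/0%R]_(u | E u t) freq pi u t n)
                      (\big[Rplus/0%R]_(u | E u t) pe u t).
Proof. by apply: cv_big => u Eut; apply: Hpe. Qed.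

Lemma total_one : \big[Rplus/0%R]_(v : V) vertex_weight pe v = 1%R.
Proof.
apply: (UL_sequence (fun n => \big[Rplus/0%R]_(v : V) \big[Rplus/0%R]_(w | E v w) freq pi v w n)).
  by apply: cv_big => v _; apply: cv_out.
apply: (Un_cv_ext (fun _ => 1%R)); last exact: Un_cv_const.
move=> n; rewrite (eq_bigr _ (fun v _ => out_sum A pi Hedge v n)).
rewrite -big_Rmult_r total_sum /Rdiv Rinv_r //.
by have := INRS_pos n; lra.
Qed.

Lemma flow_eq t : vertex_weight pe t = \big[Rplus/0%R]_(u | E u t) pe u t.
Proof.
have H1 := CV_minus _ _ _ _ (cv_out t) (cv_in t).
suff : Un_cv (fun n => \big[Rplus/0%R]_(w | E t w) freq pi t w n -
                       \big[Rplus/0%R]_(u | E u t) freq pi u t n)%R 0%R.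
  by move=> H2; have := UL_sequence _ _ _ H1 H2; lra.
move=> eps he; have [N HN] := small_tail 1%R eps he.
exists N => n /ssrnat.leP hn; rewrite /R_dist Rminus_0_r out_sum // in_sum //.
have eA : count (fun i => pi i == t) (iota 0 n.+1) =
  ((pi 0%N == t) + count (fun i => pi i == t) (iota 1 n))%N by [].
have eB : count (fun i => pi i.+1 == t) (iota 0 n.+1) =
  (count (fun i => pi i == t) (iota 1 n) + (pi n.+1 == t))%N.
  by rewrite (count_shift (fun i => pi i == t)) iota_last count_cat /= addn0 add1n.
rewrite eA eB; set c := count _ (iota 1 n).
apply: Rle_lt_trans (HN n hn).
have hp := INRS_pos n.
rewrite -Rdiv_minus_distr /Rdiv Rabs_mult Rabs_inv (Rabs_right (INR n.+1)); last lra.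
apply: Rmult_le_compat_r; first by apply: Rlt_le; apply: Rinv_0_lt_compat.
rewrite !INR_addn.
case: (pi 0%N == t); case: (pi n.+1 == t); rewrite /= ?Rplus_0_l ?Rplus_0_r;
  (apply: Rabs_le; split; lra).
Qed.

Lemma lp_flow :
 (forall v, (~ occurs_inf pi v -> vertex_weight pe v = 0%R) /\
            (occurs_inf pi v -> (0 <= vertex_weight pe v)%R)) /\
 (forall u w, E u w ->
     (~ (occurs_inf pi u /\ occurs_inf pi w) -> pe u w = 0%R) /\
     (occurs_inf pi u /\ occurs_inf pi w -> (0 <= pe u w)%R)) /\
 \big[Rplus/0%R]_(v : V) vertex_weight pe v = 1%R /\
 (forall s, occurs_inf pi s -> vertex_weight pe s = \big[Rplus/0%R]_(t : V | E s t) pe s t) /\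
 (forall t, occurs_inf pi t -> vertex_weight pe t = \big[Rplus/0%R]_(s : V | E s t) pe s t).
Proof.
split.
  move=> v; split => H.
    by rewrite /vertex_weight big1 // => w Evw; apply: (pe_zero_src A pi pe Hpe).
  by apply: big_nonneg => w Evw; apply: (pe_nonneg A pi pe Hpe).
split.
  move=> u w Euw; split => [H|_]; last exact: (pe_nonneg A pi pe Hpe).
  case: (classic (occurs_inf pi u)) => hu.
    apply: (pe_zero_tgt A pi pe Hpe) => // hw; exact: H.
  exact: (pe_zero_src A pi pe Hpe).
split; first exact: total_one.
split; first by [].
by move=> t _; apply: flow_eq.
Qed.

End LP.

Lemma ER_le_refl x : ER_le x x.
Proof. by case: x => //= x; apply: Rle_refl. Qed.

Section Main.
Variable A : arena.
Local Notation V := (Vt A).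
Local Notation P := (Pl A).
Local Notation E := (@Ed A).
Local Notation own := (@owner A).
Local Notation v0 := (init A).
Local Notation r := (@rew A).

Lemma deviate_profile (s s2 : seq V -> V) p :
  profile s -> strategy_of p s2 -> profile (deviate s p s2).
Proof.
move=> ps s2p h hp _; rewrite /deviate; case: eqP => e.
  by apply: s2p => //; apply/eqP.
exact: ps.
Qed.

Lemma deviate_off (s s2 : seq V -> V) p h :
  own (last v0 h) != p -> deviate s p s2 h = s h.
Proof. by rewrite /deviate => /negbTE ->. Qed.

Lemma play_eq_hist (s t : seq V -> V) :
  (forall n, hist v0 t n = hist v0 s n) -> play v0 t = play v0 s.
Proof. by move=> H; apply: functional_extensionality => n; rewrite /play H. Qed.

Lemma inc_const (gamma : P -> seq V -> R) p (s : seq V -> V) c :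
  (forall n, gamma p (hist v0 s n) = c) -> inc_value gamma p s = Fin c.
Proof. move=> H; rewrite /inc_value; apply: liminf_const => i; exact: H. Qed.

Lemma inc_zero tmax tmin (s t : seq V -> V) gamma p m :
  is_PSP tmax tmin s gamma -> follower p -> profile t ->
  hist v0 t m = hist v0 s m ->
  (forall k, (m < k)%N -> deviating s (hist v0 t k) /\ dev_player s (hist v0 t k) p) ->
  inc_value gamma p t = Fin 0.
Proof.
move=> HP fp pt Hh Hd; rewrite /inc_value; apply: liminf_eventually0.
exists m => i hi; apply: (gamma_zero A tmax tmin s t gamma p m) => //.

Qed.

Lemma part1_5 (val : P -> V -> R) (tmax tmin : P -> V -> V) (s : seq V -> V) gamma
  (pe : V -> V -> R) (g : P -> R) p v :
  is_PSP tmax tmin s gamma -> is_ISP s gamma ->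
  (forall u w, E u w -> Un_cv (freq (play v0 s) u w) (pe u w)) ->
  (forall n, gamma p (hist v0 s n) = g p) ->
  follower p -> optimal_G p (val p) (tmax p) (tmin p) ->
  occurs (play v0 s) v ->
  (0 <= g p)%R /\
  (val p v <= g p + \big[Rplus/0%R]_(x : V * V | E x.1 x.2) (pe x.1 x.2 * Q2R (r p x.1 x.2))%R)%R.
Proof.
move=> HP HI Hpe Hg fp [Htmax [Htmin Hval]] [n Hn].
have ps : profile s by case: HP.
have g0 : (0 <= g p)%R.
  by rewrite -(Hg 0%N); case: HP => _ [Hinc _]; apply: Hinc.
split => //.
set S := \big[Rplus/0%R]_(x : V * V | E x.1 x.2) (pe x.1 x.2 * Q2R (r p x.1 x.2))%R.
have rs : raw_payoff p s = Fin S by apply: raw_freq.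
have is_ : inc_value gamma p s = Fin (g p) by apply: inc_const.
pose s2 := fun h : seq V => if (n <= size h)%N then tmax p (last v0 h) else s h.
have s2p : strategy_of p s2.
  move=> h hp /eqP ho; rewrite /s2; case: ifP => _; first by rewrite -ho in Htmax *; apply: Htmax.
  exact: ps.
set t := deviate s p s2.
have pt : profile t by apply: deviate_profile.
have Hoff : forall h, own (last v0 h) != p -> t h = s h by move=> h; apply: deviate_off.
have htn : hist v0 t n = hist v0 s n.
  apply: hist_agree => k hk; rewrite /t /deviate; case: ifP => // _.
  by rewrite /s2 size_hist leqNgt hk.
have pvn : play v0 t n = v by rewrite /play htn -Hn.
have Hlow : ER_le (Fin (val p v)) (raw_payoff p t).
  rewrite /raw_payoff (mean_payoff_play_shift A p v0 t n).
  set t' := shift A t (hist v0 t n).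
  rewrite pvn.
  have st' : strategy_for v (fun q => q != p) t' by rewrite -pvn; apply: shift_strategy.
  have -> : play v t' = play v (combine v p (fun h => tmax p (last v h)) t').
    apply: play_agree => k; rewrite /combine; case: ifP => // /eqP ho.
    rewrite /t' /shift /t /deviate last_cat -/(play v0 t n) pvn ho eqxx /s2.
    by rewrite size_cat size_hist leq_addr last_cat -/(play v0 t n) pvn.
  by have [H1 _] := Hval v; apply: H1.
have HI' := HI p fp s2 s2p; rewrite -/t rs is_ in HI'.
case: (dev_cases A s t p Hoff) => [Hall|[m [_ [Hhm [_ Hdev]]]]].
  rewrite /raw_payoff (play_eq_hist _ _ Hall) -/(raw_payoff p s) rs /= in Hlow.
  lra.
rewrite (inc_zero tmax tmin s t gamma p m) // in HI'.
move: Hlow HI'; case: (raw_payoff p t) => [x||] //= h1 h2; lra.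
Qed.


Lemma part2 (val : P -> V -> R) (tmax tmin : P -> V -> V)
  (Hopt : forall p, follower p -> optimal_G p (val p) (tmax p) (tmin p))
  (s : seq V -> V) (pe : V -> V -> R) (g : P -> R) :
  profile s ->
  (forall u w, E u w -> Un_cv (freq (play v0 s) u w) (pe u w)) ->
  sat_LP val (occurs (play v0 s)) (occurs_inf (play v0 s)) (vertex_weight pe) pe g ->
  forall (s' : seq V -> V) (gamma' : P -> seq V -> R),
    is_PSP tmax tmin s' gamma' ->
    (forall n, play v0 s' n = play v0 s n) ->
    (forall p, follower p -> forall n, gamma' p (hist v0 s' n) = g p) ->
    is_ISP s' gamma'.
Proof.
move=> ps Hpe HLP s' gamma' HP Hpl Hg' p fp s2 s2p.
have [_ [_ [_ [HPii _]]]] : _ := HP.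
have ps' : profile s' by case: HP.
have [Htmax [Htmin Hval]] := Hopt p fp.
set t := deviate s' p s2.
have pt : profile t by apply: deviate_profile.
have Hoff : forall h, own (last v0 h) != p -> t h = s' h by move=> h; apply: deviate_off.
case: (dev_cases A s' t p Hoff) => [Hall|[m [Hom [Hhm [_ Hdev]]]]].
  rewrite /raw_payoff /inc_value (play_eq_hist _ _ Hall).
  have -> : (fun i => gamma' p (hist v0 t i.+1)) = (fun i => gamma' p (hist v0 s' i.+1)).
    by apply: functional_extensionality => i; rewrite Hall.
  exact: ER_le_refl.
rewrite (inc_zero tmax tmin s' t gamma' p m) //.
set S := \big[Rplus/0%R]_(x : V * V | E x.1 x.2) (pe x.1 x.2 * Q2R (r p x.1 x.2))%R.
have rs' : raw_payoff p s' = Fin S.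
  rewrite /raw_payoff (_ : play v0 s' = play v0 s); last exact: functional_extensionality.
  exact: raw_freq.
rewrite rs' (inc_const gamma' p s' (g p) (Hg' p fp)).
set u := play v0 t m.
have Hup : ER_le (raw_payoff p t) (Fin (val p u)).
  rewrite /raw_payoff (mean_payoff_play_shift A p v0 t m) -/u.
  set t' := shift A t (hist v0 t m).
  have st' : strategy_for u (fun q => q == p) t' by apply: shift_strategy.
  have -> : play u t' = play u (combine u p t' (fun h => tmin p (last u h))).
    apply: play_agree => k; rewrite /combine; case: ifP => // /negbT ho.
    case: k ho => [|k] ho.
      by rewrite /= /u /play Hom eqxx in ho.
    rewrite /t' /shift -hist_cat /t deviate_off; last first.
      by rewrite hist_cat last_cat -/(play v0 t m) -/u.
    have [dk pk] := Hdev (m + k.+1)%N ltac:(by rewrite -addn1 leq_add2l ltn0Sn).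
    rewrite (HPii _ (path_hist _ v0 t _ pt) dk p fp pk).
    rewrite hist_cat last_cat -/(play v0 t m) -/u (negbTE ho).
    by [].
  by have [_ H2] := Hval u; apply: H2.
have [_ [_ [_ [_ [_ H5]]]]] := HLP.
have hu : occurs (play v0 s) u by exists m; rewrite -Hpl /u /play Hhm.
have [_ H5'] := H5 p fp; have Hvu := H5' u hu.
move: Hup; case: (raw_payoff p t) => [x||] //= h.
move: Hvu; rewrite -/S => Hvu; lra.
Qed.

End Main.

Theorem corollary1 (A : arena) (val : Pl A -> Vt A -> R)
    (tmax tmin : Pl A -> Vt A -> Vt A)
    (Hopt : forall p, follower p -> optimal_G p (val p) (tmax p) (tmin p)) :
  (* (i) *)
  (forall (sigma : seq (Vt A) -> Vt A) (gamma : Pl A -> seq (Vt A) -> R),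
     is_PSP tmax tmin sigma gamma -> is_ISP sigma gamma -> well_behaved sigma ->
     forall (pe : Vt A -> Vt A -> R) (g : Pl A -> R),
       (forall u w, @Ed A u w -> Un_cv (freq (play (init A) sigma) u w) (pe u w)) ->
       (forall p, follower p -> forall n, gamma p (hist (init A) sigma n) = g p) ->
       sat_LP val (occurs (play (init A) sigma)) (occurs_inf (play (init A) sigma))
              (vertex_weight pe) pe g)
  /\
  (* (ii) *)
  (forall (sigma : seq (Vt A) -> Vt A) (gamma : Pl A -> seq (Vt A) -> R),
     profile sigma -> is_incentive gamma -> well_behaved sigma ->
     forall (pe : Vt A -> Vt A -> R) (g : Pl A -> R),
       (forall u w, @Ed A u w -> Un_cv (freq (play (init A) sigma) u w) (pe u w)) ->
       (forall p, follower p -> inc_value gamma p sigma = Fin (g p)) ->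
       sat_LP val (occurs (play (init A) sigma)) (occurs_inf (play (init A) sigma))
              (vertex_weight pe) pe g ->
       forall (sigma' : seq (Vt A) -> Vt A) (gamma' : Pl A -> seq (Vt A) -> R),
         is_PSP tmax tmin sigma' gamma' ->
         (forall n, play (init A) sigma' n = play (init A) sigma n) ->
         (forall p, follower p -> forall n, gamma' p (hist (init A) sigma' n) = g p) ->
         is_ISP sigma' gamma').
Proof.
split.
  move=> sigma gamma HP HI _ pe g Hpe Hg.
  have ps : profile sigma by case: HP.
  have Hedge := fun i => edge_play A (init A) sigma i ps.
  have [H1 [H2 [H3 [H4 H4']]]] := lp_flow A (play (init A) sigma) Hedge pe Hpe.
  do 5 (split; first by []).
  move=> p fp; split.
    have := part1_5 A val tmax tmin sigma gamma pe g p (play (init A) sigma 0%N) HP HI Hpe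
      (Hg p fp) fp (Hopt p fp) (ex_intro _ 0%N erefl).
    by case.
  move=> v hv.
  have := part1_5 A val tmax tmin sigma gamma pe g p v HP HI Hpe (Hg p fp) fp (Hopt p fp) hv.
  by case.
move=> sigma gamma ps _ _ pe g Hpe _ HLP sigma' gamma' HP Hpl Hg'.
exact: (part2 A val tmax tmin Hopt sigma pe g ps Hpe HLP sigma' gamma' HP Hpl Hg').
Qed.
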